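(* Fix a dimension $d\ge 1$ and call permutations achievable with respect to $d$-dimensional boxes. (1) If $p_1\in S_n$ and $p_2\in S_k$ are achievable, then the permutation in $S_{n+k}$ whose one-line notation is $p_1(1)\cdots p_1(n)\,(p_2(1)+n)\cdots(p_2(k)+n)$ is achievable. (2) If $p\in S_n$ is achievable and $x\in\{1,\dots,n\}$, then the permutation in $S_{n+1}$ obtained from the one-line notation of $p$ by replacing the entry $x$ with the two consecutive entries $x,\,x+1$ and increasing every other entry greater than $x$ by $1$ is achievable. (3) If $p$ is achievable, then so is its inverse $p^{-1}$.
   Context: A $d$-dimensional box $A$ has closed side lengths $a_1\le\dots\le a_d$ (positive reals). A state of $A$ is either closed or expanded along one side $i$: $a_i$ is replaced by $a_i'$ with $a_i\le a_i'\le 2a_i$, other sides unchanged (only one side can expand). The dimension vector of a state is its side lengths sorted non-decreasingly. A box in some state fits inside another box in some state if each coordinate of the outer one's dimension vector is strictly larger than the corresponding coordinate of the inner one's. An order $X_1,\dots,X_m$ (innermost to outermost) of boxes is a possible arrangement if each box can be given a state so that $X_j$ fits inside $X_{j+1}$ for all $j$; states may differ between arrangements. A permutation $p\in S_m$, written in one-line notation $p(1)p(2)\cdots p(m)$, is achievable if there exist $d$-dimensional boxes $B_1,\dots,B_m$ such that both the natural order $B_1,B_2,\dots,B_m$ and the order $B_{p(1)},B_{p(2)},\dots,B_{p(m)}$ (innermost to outermost) are possible arrangements. *)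

(* Defs.v *)
From HB Require Import structures.
From mathcomp Require Import all_boot all_order all_algebra all_fingroup.
From mathcomp Require Import reals.
Set Implicit Arguments. Unset Strict Implicit. Unset Printing Implicit Defensive.
Import Order.TTheory GRing.Theory Num.Theory.
Local Open Scope ring_scope.

Section Boxes.
Variables (R : realType) (d : nat).

(* A box (or a state of a box) is given by its side lengths, indexed by 'I_d. *)
Definition box := 'I_d -> R.

Definition valid_box (a : box) : Prop := forall i, 0 < a i.

Definition is_state (a s : box) : Prop :=
  s = a \/
  exists i : 'I_d, [/\ a i <= s i, s i <= 2 * a i & forall j, j != i -> s j = a j].

Definition dimvec (s : box) : seq R := sort <=%R [seq s k | k : 'I_d].

Definition fits (s t : box) : Prop :=
  forall k : 'I_d, nth 0 (dimvec s) k < nth 0 (dimvec t) k.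

(* X 0, X 1, ..., X (m-1) (innermost to outermost) is a possible arrangement *)
Definition possible_arrangement (m : nat) (X : 'I_m -> box) : Prop :=
  exists S : 'I_m -> box,
    (forall j, is_state (X j) (S j)) /\
    (forall j k : 'I_m, (k : nat) = j.+1 -> fits (S j) (S k)).

(* p (0-indexed, p j is the (j+1)-th entry of the one-line notation) *)
Definition achievable (m : nat) (p : 'S_m) : Prop :=
  exists B : 'I_m -> box,
    (forall i, valid_box (B i)) /\
    possible_arrangement B /\
    possible_arrangement (fun j => B (p j)).

End Boxes.

(* Main.v *)
Require Import Defs.
From HB Require Import structures.
From mathcomp Require Import all_boot all_order all_algebra all_fingroup.
From mathcomp Require Import reals.
From mathcomp Require Import zify.
Set Implicit Arguments. Unset Strict Implicit. Unset Printing Implicit Defensive.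
Import Order.TTheory GRing.Theory Num.Theory.
Local Open Scope ring_scope.

Section H.
Variables (R : realType) (d : nat).
Implicit Types (s t a b : box R d) (c l : R).

Definition sc (c : R) (s : box R d) : box R d := fun k => c * s k.

Lemma size_dimvec s : size (dimvec s) = d.
Proof. by rewrite /dimvec size_sort size_map size_enum_ord. Qed.

Lemma dimvec_mem s (k : 'I_d) : exists i, nth 0 (dimvec s) k = s i.
Proof.
have : nth 0 (dimvec s) k \in dimvec s by rewrite mem_nth // size_dimvec.
by rewrite /dimvec mem_sort => /mapP [i _ ->]; exists i.
Qed.

Lemma dimvec_sc c s : 0 < c -> dimvec (sc c s) = map (fun x => c * x) (dimvec s).
Proof.
move=> c0; apply: (@sorted_eq _ <=%R).
- exact: le_trans.
- move=> x y /andP [h1 h2]; apply/eqP; by rewrite eq_le h1 h2.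
- exact: (sort_sorted (@le_total _ _)).
- rewrite sorted_map; rewrite (@eq_sorted _ _ <=%R); first exact: (sort_sorted (@le_total _ _)).
  by move=> x y /=; rewrite ler_pM2l.
- rewrite /dimvec perm_sort perm_sym /=.
  have -> : [seq sc c s k | k : 'I_d] = map (fun x => c * x) [seq s k | k : 'I_d].
    by rewrite -map_comp; apply: eq_map => k.
  set L := [seq s k | k : 'I_d].
  have h : perm_eq (sort <=%R L) L.
    apply: permEl; exact: (@perm_sort R _ L).
  exact: (perm_map _ h).
Qed.

Lemma nth_dimvec_sc c s (k : 'I_d) : 0 < c ->
  nth 0 (dimvec (sc c s)) k = c * nth 0 (dimvec s) k.
Proof. move=> c0; rewrite (dimvec_sc _ c0). rewrite (nth_map 0) //; rewrite size_dimvec; exact: ltn_ord. Qed.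

Lemma fits_sc c s t : 0 < c -> fits s t -> fits (sc c s) (sc c t).
Proof. move=> c0 st k; rewrite (nth_dimvec_sc _ _ c0) (nth_dimvec_sc _ _ c0) (ltr_pM2l c0); exact: st. Qed.

Lemma fits_sep s t : (forall i j, s i < t j) -> fits s t.
Proof.
move=> h k; have [i ->] := dimvec_mem s k; have [j ->] := dimvec_mem t k; exact: h.
Qed.

Lemma fits_shrink l s : 0 < l -> l < 1 -> (forall k, 0 < s k) -> fits (sc l s) s.
Proof.
move=> l0 l1 sp k; rewrite (nth_dimvec_sc _ _ l0).
have [i ->] := dimvec_mem s k; rewrite gtr_pMl; [exact: l1 | exact: sp].
Qed.

Lemma fin_ub (T : finType) (f : T -> R) : exists2 L, 0 < L & forall x, f x < L.
Proof.
have hs : forall P : pred T, 0 <= \sum_(x | P x) `|f x| by move=> P; apply: sumr_ge0 => x _.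
exists (\sum_x `|f x| + 1).
  by apply: ltr_wpDl; [apply: hs | apply: ltr01].
move=> x; rewrite (bigD1 x) //= -addrA.
apply: (le_lt_trans (ler_norm (f x))); rewrite ltrDl.
by apply: ltr_wpDl; [apply: hs | apply: ltr01].
Qed.

Lemma fin_lb (T : finType) (f : T -> R) : (forall x, 0 < f x) ->
  exists2 e, 0 < e & forall x, e < f x.
Proof.
move=> fp; have [L L0 hL] := fin_ub (fun x => (f x)^-1).
exists L^-1; first by rewrite invr_gt0.
move=> x; rewrite -(invrK (f x)) ltf_pV2 ?posrE ?invr_gt0 //; exact: hL.
Qed.

Lemma fits_shrinkex a b : fits a b -> (forall k, 0 < b k) ->
  exists2 l0, l0 < 1 & forall mu, 0 < mu -> l0 <= mu -> fits a (sc mu b).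
Proof.
move=> ab bp.
have nbp : forall k : 'I_d, 0 < nth 0 (dimvec b) k.
  by move=> k; have [i ->] := dimvec_mem b k; apply: bp.
have hpos : forall k : 'I_d, 0 < 1 - nth 0 (dimvec a) k / nth 0 (dimvec b) k.
  by move=> k; rewrite subr_gt0 (ltr_pdivrMr _ _ (nbp k)) mul1r; apply: ab.
have [e e0 he] := fin_lb hpos.
exists (1 - e); first by rewrite ltrBlDr ltrDl.
  move=> mu mu0 lmu k; rewrite (nth_dimvec_sc _ _ mu0).
  have := he k; rewrite ltrBrDl -ltrBrDr => h.
  have h2 : nth 0 (dimvec a) k / nth 0 (dimvec b) k < mu by apply: lt_le_trans lmu.
  by rewrite -(ltr_pdivrMr _ _ (nbp k)).
Qed.

Lemma state_pos a s : valid_box a -> is_state a s -> forall k, 0 < s k.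
Proof.
move=> va [->|[i [h1 h2 h3]]] k; first exact: va.
case: (eqVneq k i) => [->|ki]; first exact: lt_le_trans (va i) h1.
by rewrite h3.
Qed.

Lemma state_sc c a s : 0 < c -> is_state a s -> is_state (sc c a) (sc c s).
Proof.
move=> c0 [->|[i [h1 h2 h3]]]; first by left.
right; exists i; split.
- by rewrite /sc ler_pM2l.
- by rewrite /sc mulrCA ler_pM2l.
- by move=> j ji; rewrite /sc h3.
Qed.

Lemma arr_ext m (X Y : 'I_m -> box R d) :
  possible_arrangement X -> (forall j, X j = Y j) -> possible_arrangement Y.
Proof. by move=> [S [h1 h2]] e; exists S; split => // j; rewrite -e. Qed.

Definition catb n k c (C1 : 'I_n -> box R d) (C2 : 'I_k -> box R d) (i : 'I_(n + k)) : box R d :=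
  match split i with inl a => C1 a | inr b => sc c (C2 b) end.

Lemma arr_concat n k c (C1 S1 : 'I_n -> box R d) (C2 S2 : 'I_k -> box R d) :
  0 < c ->
  (forall j, is_state (C1 j) (S1 j)) -> (forall j, is_state (C2 j) (S2 j)) ->
  (forall j j' : 'I_n, (j' : nat) = j.+1 -> fits (S1 j) (S1 j')) ->
  (forall j j' : 'I_k, (j' : nat) = j.+1 -> fits (S2 j) (S2 j')) ->
  (forall (j : 'I_n) (j' : 'I_k), j.+1 = n -> (j' : nat) = 0%N -> fits (S1 j) (sc c (S2 j'))) ->
  possible_arrangement (catb c C1 C2).
Proof.
move=> c0 hs1 hs2 f1 f2 sep; exists (catb c S1 S2); split.
  by move=> i; rewrite /catb; case: splitP => a _; [apply: hs1 | apply: state_sc].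
move=> j j'; rewrite /catb; case: splitP => a ha; case: splitP => b hb e.
- by apply: f1; rewrite -hb e ha.
- apply: sep; first by have := ltn_ord a; lia.
  by have := ltn_ord a; lia.
- by have := ltn_ord b; lia.
- by apply: fits_sc => //; apply: f2; lia.
Qed.

Definition ub n (x : 'I_n) (i : 'I_n.+1) : 'I_n.
Proof.
refine (@Ordinal n (unbump x i) _).
rewrite /unbump; case: ltnP => h; have := ltn_ord i; have := ltn_ord x; lia.
Defined.

Lemma ubE n (x : 'I_n) (i : 'I_n.+1) : (ub x i : nat) = if (x < i)%N then i.-1 else i.
Proof. by rewrite /= /unbump; case: ltnP => h; rewrite ?subn1 ?subn0. Qed.

Definition infb n (x : 'I_n) l (C : 'I_n -> box R d) (i : 'I_n.+1) : box R d :=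
  if (i == x :> nat) then sc l (C (ub x i)) else C (ub x i).

Lemma arr_inflate n (x : 'I_n) l (C S : 'I_n -> box R d) :
  0 < l -> l < 1 ->
  (forall j, is_state (C j) (S j)) -> (forall j k, 0 < S j k) ->
  (forall j j' : 'I_n, (j' : nat) = j.+1 -> fits (S j) (S j')) ->
  (forall j : 'I_n, j.+1 = x -> fits (S j) (sc l (S x))) ->
  possible_arrangement (infb x l C).
Proof.
move=> l0 l1 hs sp f pre; exists (infb x l S); split.
  by move=> i; rewrite /infb; case: ifP => _; [apply: state_sc | apply: hs].
move=> i i' e; rewrite /infb.
case: ifP => /eqP h1; case: ifP => /eqP h2.
- lia.
- have -> : ub x i' = x by apply: ord_inj; rewrite ubE; case: (ltnP x i'); lia.
  have -> : ub x i = x by apply: ord_inj; rewrite ubE; case: (ltnP x i); lia.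
  exact: fits_shrink.
- have -> : ub x i' = x by apply: ord_inj; rewrite ubE; case: (ltnP x i'); lia.
  apply: pre; rewrite ubE; case: (ltnP x i); lia.
- apply: f; rewrite !ubE; case: (ltnP x i); case: (ltnP x i'); lia.
Qed.

Lemma shrink_pred n (S : 'I_n -> box R d) (x : 'I_n) :
  (forall j j' : 'I_n, (j' : nat) = j.+1 -> fits (S j) (S j')) ->
  (forall k, 0 < S x k) ->
  exists2 l0, l0 < 1 & forall j : 'I_n, j.+1 = x ->
     forall mu, 0 < mu -> l0 <= mu -> fits (S j) (sc mu (S x)).
Proof.
move=> f sp; case: (posnP x) => hx.
  by exists 0 => // j hj; rewrite hx in hj.
have hn : (x.-1 < n)%N by have := ltn_ord x; lia.
have [l0 l01 hl] := fits_shrinkex (f (Ordinal hn) x ltac:(simpl; lia)) sp.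
exists l0 => // j hj; have -> : j = Ordinal hn by apply: ord_inj => /=; lia.
exact: hl.
Qed.
End H.

Lemma unbump_lt h i : (h < i)%N -> unbump h i = i.-1.
Proof. by move=> hi; rewrite /unbump hi subn1. Qed.
Lemma unbump_ge h i : (i <= h)%N -> unbump h i = i.
Proof. by move=> hi; rewrite /unbump ltnNge hi subn0. Qed.

Lemma keyq n (p : 'S_n) (x0 pos : 'I_n) (q : 'S_n.+1) :
  p pos = x0 ->
  (forall i : 'I_n, (i < pos)%N ->
      (q (widen_ord (leqnSn n) i) : nat) = bump x0 (p i)) ->
  (q (widen_ord (leqnSn n) pos) : nat) = x0 ->
  (q (lift ord0 pos) : nat) = x0.+1 ->
  (forall i : 'I_n, (pos < i)%N ->
      (q (lift ord0 i) : nat) = bump x0 (p i)) ->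
  forall j, (q j == x0 :> nat) = (j == pos :> nat) /\ ub x0 (q j) = p (ub pos j).
Proof.
move=> hp hlt hpos hpos1 hgt j.
case: (ltngtP j pos) => hj.
- have jn : (j < n)%N by have := ltn_ord pos; lia.
  have ej : j = widen_ord (leqnSn n) (Ordinal jn) by apply: ord_inj.
  have eu : ub pos j = Ordinal jn by apply: ord_inj; rewrite /= unbump_ge //; lia.
  have eq : q j = q (widen_ord (leqnSn n) (Ordinal jn)) by rewrite -ej.
  rewrite eu eq (hlt (Ordinal jn) hj); split.
    by rewrite eq_sym (negbTE (neq_bump _ _)); apply/esym/eqP; lia.
  by apply: ord_inj; rewrite /= (hlt (Ordinal jn) hj) bumpK.
- have jn : (j.-1 < n)%N by have := ltn_ord j; lia.
  have ej : j = lift ord0 (Ordinal jn) by apply: ord_inj; rewrite lift0 /=; lia.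
  have eu : ub pos j = Ordinal jn by apply: ord_inj; rewrite /= unbump_lt //.
  have eq : q j = q (lift ord0 (Ordinal jn)) by rewrite -ej.
  rewrite eu eq; case: (ltngtP pos (Ordinal jn)) => hi.
  + rewrite (hgt _ hi); split.
      by rewrite eq_sym (negbTE (neq_bump _ _)); apply/esym/eqP; simpl in hi; lia.
    by apply: ord_inj; rewrite /= (hgt _ hi) bumpK.
  + simpl in hi; lia.
  + have ei : Ordinal jn = pos by apply: ord_inj.
    rewrite ei hpos1; split.
      have -> : (x0.+1 == x0) = false by apply/eqP; lia.
      by apply/esym/eqP; lia.
    by apply: ord_inj; rewrite /= hpos1 unbump_lt // -hp.
- have ej : j = widen_ord (leqnSn n) pos by apply: ord_inj.
  have eu : ub pos j = pos by apply: ord_inj; rewrite /= unbump_ge //; lia.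
  have eq : q j = q (widen_ord (leqnSn n) pos) by rewrite -ej.
  rewrite eu eq hpos; split; first by rewrite eqxx; apply/esym/eqP.
  by apply: ord_inj; rewrite /= hpos unbump_ge // hp.
Qed.

Theorem theorem17 (R : realType) (d : nat) (hd : (1 <= d)%N) :
  (* (1) direct sum *)
  (forall (n k : nat) (p1 : 'S_n) (p2 : 'S_k) (q : 'S_(n + k)),
      achievable R d p1 -> achievable R d p2 ->
      (forall i : 'I_n, q (lshift k i) = lshift k (p1 i)) ->
      (forall j : 'I_k, q (rshift n j) = rshift n (p2 j)) ->
      achievable R d q) /\
  (* (2) inflating the entry x (0-indexed x0, at position pos) into x, x+1 *)
  (forall (n : nat) (p : 'S_n) (x0 pos : 'I_n) (q : 'S_n.+1),
      achievable R d p -> p pos = x0 ->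
      (forall i : 'I_n, (i < pos)%N ->
          (q (widen_ord (leqnSn n) i) : nat) = bump x0 (p i)) ->
      (q (widen_ord (leqnSn n) pos) : nat) = x0 ->
      (q (lift ord0 pos) : nat) = x0.+1 ->
      (forall i : 'I_n, (pos < i)%N ->
          (q (lift ord0 i) : nat) = bump x0 (p i)) ->
      achievable R d q) /\
  (* (3) inverse *)
  (forall (m : nat) (p : 'S_m), achievable R d p -> achievable R d (p^-1)%g).
Proof.
split; [|split].
- move=> n k p1 p2 q [B1 [v1 [[S1 [hs1 f1]] [T1 [ht1 g1]]]]]
    [B2 [v2 [[S2 [hs2 f2]] [T2 [ht2 g2]]]]] hq1 hq2.
  have pS1 := fun j => state_pos (v1 j) (hs1 j).
  have pT1 := fun j => state_pos (v1 (p1 j)) (ht1 j).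
  have pS2 := fun j => state_pos (v2 j) (hs2 j).
  have pT2 := fun j => state_pos (v2 (p2 j)) (ht2 j).
  have [M M0 hM] := fin_ub (fun z : 'I_n * 'I_d => S1 z.1 z.2 + T1 z.1 z.2).
  have hpos : forall z : 'I_k * 'I_d, 0 < Num.min (S2 z.1 z.2) (T2 z.1 z.2).
    by move=> z; rewrite lt_min pS2 pT2.
  have [e e0 he] := fin_lb hpos.
  set c := M / e.
  have c0 : 0 < c by rewrite /c divr_gt0.
  have sepS : forall (j : 'I_n) (j' : 'I_k), fits (S1 j) (sc c (S2 j')).
    move=> j j'; apply: fits_sep => a b.
    have h1 := hM (j, a); have h2 := he (j', b); rewrite /= lt_min in h2.
    case/andP: h2 => h2 _.
    have h3 : S1 j a < M by apply: le_lt_trans h1; rewrite lerDl; apply/ltW/pT1.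
    apply: (lt_trans h3); rewrite /sc /c -mulrA ltr_pMr // ltr_pdivlMl // mulr1.
    exact: h2.
  have sepT : forall (j : 'I_n) (j' : 'I_k), fits (T1 j) (sc c (T2 j')).
    move=> j j'; apply: fits_sep => a b.
    have h1 := hM (j, a); have h2 := he (j', b); rewrite /= lt_min in h2.
    case/andP: h2 => _ h2.
    have h3 : T1 j a < M by apply: le_lt_trans h1; rewrite lerDr; apply/ltW/pS1.
    apply: (lt_trans h3); rewrite /sc /c -mulrA ltr_pMr // ltr_pdivlMl // mulr1.
    exact: h2.
  exists (catb c B1 B2); split; [|split].
  + move=> i j; rewrite /catb; case: (split i) => a; first exact: v1.
    by rewrite /sc mulr_gt0 //; apply: v2.
  + exact: arr_concat c0 hs1 hs2 f1 f2 (fun j j' _ _ => sepS j j').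
  + apply: (arr_ext (X := catb c (fun a => B1 (p1 a)) (fun b => B2 (p2 b)))).
      exact: arr_concat c0 ht1 ht2 g1 g2 (fun j j' _ _ => sepT j j').
    move=> j; rewrite /catb; case: splitP => a ha.
    * have -> : j = lshift k a by apply: ord_inj.
      by rewrite hq1 (unsplitK (inl _ (p1 a))).
    * have -> : j = rshift n a by apply: ord_inj.
      by rewrite hq2 (unsplitK (inr _ (p2 a))).
- move=> n p x0 pos q [B [vB [[S [hs f]] [T [ht g]]]]] hp hlt hpos hpos1 hgt.
  have pS := fun j => state_pos (vB j) (hs j).
  have pT := fun j => state_pos (vB (p j)) (ht j).
  have [l1 l11 hl1] := shrink_pred f (pS x0).
  have [l2 l21 hl2] := shrink_pred g (pT pos).
  set lam := Num.max (Num.max l1 l2) 2^-1.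
  have lam0 : 0 < lam by rewrite /lam lt_max invr_gt0 ltr0n orbT.
  have lam1 : lam < 1 by rewrite /lam !gt_max l11 l21 invf_lt1 // ltr1n.
  have lam_l1 : l1 <= lam by rewrite /lam !le_max lexx.
  have lam_l2 : l2 <= lam by rewrite /lam !le_max lexx orbT.
  exists (infb x0 lam B); split; [|split].
  + move=> i j; rewrite /infb; case: ifP => _; last exact: vB.
    by rewrite /sc mulr_gt0 //; apply: vB.
  + apply: (arr_inflate lam0 lam1 hs (fun j => pS j) f).
    by move=> j hj; apply: hl1.
  + apply: (arr_ext (X := infb pos lam (fun j => B (p j)))).
      apply: (arr_inflate lam0 lam1 ht (fun j => pT j) g).
      by move=> j hj; apply: hl2.
    move=> j; have [k1 k2] := keyq hp hlt hpos hpos1 hgt j.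
    by rewrite /infb k1 k2.
- move=> m p [B [vB [h1 h2]]].
  exists (fun i => B (p i)); split; [|split].
  + by move=> i; apply: vB.
  + exact: h2.
  + apply: (arr_ext h1) => j; by rewrite permKV.
Qed.
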